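(* Let $\mathcal{C}$ be a finite or countable alphabet with letter probabilities $(p_\alpha)_{\alpha\in\mathcal{C}}$, $0<p_\alpha<1$, $\sum_\alpha p_\alpha=1$, and let $\mathbb{P}$ be the product measure on $\mathcal{C}^{\mathbb{N}}$ with these identically distributed marginals. View each $S_n$ as a random variable on $\mathcal{C}^{\mathbb{N}}$ via $S_n(x)=S_n(x_1^n)$. Then there is no random variable $S$ on $\mathcal{C}^{\mathbb{N}}$ such that $S_n$ converges in probability to $S$.
   Context: $x_a^b=(x_a,\dots,x_b)$. The first return is $T_n(x_1^n)=\min\{j\ge1: x_1^{n-j}=x_{j+1}^n\}$ ($T_n=n$ if the set is empty), and $S_n=n-T_n$. *)

(* Defs.v *)
From HB Require Import structures.
From mathcomp Require Import all_boot all_order all_algebra.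
From mathcomp Require Import all_classical all_reals all_analysis.
Set Implicit Arguments. Unset Strict Implicit. Unset Printing Implicit Defensive.
Import Order.TTheory GRing.Theory Num.Theory.

Local Open Scope classical_set_scope.

(* Sequences x = (x_1, x_2, ...) in C^N are represented as x : nat -> C,
   with the paper's x_k stored at x (k-1). *)

Definition cyl (C : Type) (n : nat) (a : nat -> C) : set (nat -> C) :=
  [set x | forall i, (i < n)%N -> x i = a i].

Definition cylinders (C : Type) : set (set (nat -> C)) :=
  [set A | exists n a, A = cyl n a].

(* C^N with the product sigma-algebra (generated by the cylinders) *)
Definition seqspace (C : pointedType) := g_sigma_algebraType (@cylinders C).

Definition is_period (C : eqType) (n : nat) (x : nat -> C) (j : nat) : bool :=
  all (fun i => x i == x (i + j)) (iota 0 (n - j)).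

Definition Tret (C : eqType) (n : nat) (x : nat -> C) : nat :=
  head n [seq j <- iota 1 n | is_period n x j].

Definition Sret (C : eqType) (n : nat) (x : nat -> C) : nat := n - Tret n x.

(* Main.v *)
Require Import Defs.
From HB Require Import structures.
From mathcomp Require Import all_boot all_order all_algebra.
From mathcomp Require Import all_classical all_reals all_analysis.
From mathcomp Require Import zify measurable_realfun ring lra.
Import Order.TTheory GRing.Theory Num.Theory.
Local Open Scope classical_set_scope.
Local Open Scope classical_set_scope.

Section Comb.
Variable C : eqType.

Lemma head_filter_iota (P : pred nat) d j : forall len lo,
  (lo <= j < lo + len)%N -> P j -> (head d [seq k <- iota lo len | P k] <= j)%N.
Proof.
elim=> [|len IH] lo; first by rewrite addn0 => /andP[h1 h2]; move: (leq_trans h2 h1); rewrite ltnn.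
move=> /andP[h1 h2] Pj /=.
case: ifP => Plo /=; first by [].
apply: IH => //; apply/andP; split; last by rewrite addSnnS.
rewrite ltn_neqAle h1 andbT; apply/eqP => E; by rewrite E Pj in Plo.
Qed.

Lemma Tret_le n (x : nat -> C) j : (1 <= j <= n)%N -> is_period n x j -> (Tret n x <= j)%N.
Proof.
move=> /andP[h1 h2] Pj; rewrite /Tret; apply: head_filter_iota => //.
by rewrite h1 /= add1n ltnS.
Qed.

Lemma Tret_period n (x : nat -> C) : (Tret n x < n)%N -> is_period n x (Tret n x).
Proof.
rewrite /Tret; case E: [seq j <- iota 1 n | is_period n x j] => [|t s] /=.
  by rewrite ltnn.
move=> _; have : t \in [seq j <- iota 1 n | is_period n x j] by rewrite E mem_head.
by rewrite mem_filter => /andP[].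
Qed.

Lemma Sret_ge1 n (x : nat -> C) : (2 <= n)%N -> x 0%N = x n.-1 -> (1 <= Sret n x)%N.
Proof.
move=> n2 e; rewrite /Sret subn_gt0.
have : (Tret n x <= n.-1)%N.
  apply: Tret_le; first by apply/andP; split; lia.
  rewrite /is_period.
  have -> : (n - n.-1 = 1)%N by lia.
  by rewrite /= andbT add0n e.
lia.
Qed.

Lemma Sret_border n (x : nat -> C) : (1 <= Sret n x)%N -> x (Sret n x).-1 = x n.-1.
Proof.
rewrite /Sret subn_gt0 => hT.
have := @Tret_period n x hT; rewrite /is_period => /allP /(_ (n - Tret n x).-1).
have hpos : (0 < n - Tret n x)%N by rewrite subn_gt0.
rewrite mem_iota add0n prednK // leqnn /= => /(_ isT) /eqP ->; congr x.
lia.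
Qed.
End Comb.
Lemma Sret_dep (C : eqType) n (x y : nat -> C) : (forall i, (i < n)%N -> x i = y i) -> Sret n x = Sret n y.
Proof.
move=> hxy; rewrite /Sret /Tret; congr (_ - head _ _)%N; apply: eq_filter => j.
rewrite /is_period; apply: eq_in_all => i; rewrite mem_iota add0n => /andP[_ hi].
by rewrite !hxy //; lia.
Qed.
Local Open Scope classical_set_scope.

Section Meas.
Variable C : pointedType.
Hypothesis hC : countable [set: C].

Definition upd (a : nat -> C) m c : nat -> C := fun i => if i == m then c else a i.

Lemma cyl_meas m a : measurable (cyl m a : set (seqspace C)).
Proof. apply: sub_sigma_algebra; by exists m, a. Qed.

Definition depends (n : nat) (Q : set (nat -> C)) :=
  forall x y, (forall i, (i < n)%N -> x i = y i) -> Q x -> Q y.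

Lemma cyl_split m a (Q : set (nat -> C)) :
  cyl m a `&` Q = \bigcup_c (cyl m.+1 (upd a m c) `&` Q).
Proof.
apply/seteqP; split => x /=.
  move=> [hx Qx]; exists (x m) => //; split => // i; rewrite ltnS leq_eqVlt /upd.
  by case/orP => [/eqP ->|/[dup] him /hx ->]; rewrite ?eqxx // (ltn_eqF him).
move=> [c _ [hx Qx]]; split => // i him; by rewrite hx ?ltnS 1?ltnW // /upd (ltn_eqF him).
Qed.

Lemma meas_dep_gen n : forall m a (Q : set (nat -> C)), depends (m + n) Q ->
  measurable (cyl m a `&` Q : set (seqspace C)).
Proof.
elim: n => [|n IH] m a Q dQ.
  have [Qa|nQa] := pselect (Q a).
    have -> : cyl m a `&` Q = cyl m a.
      apply/seteqP; split => x /=; first by case.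
      move=> hx; split => //; apply: (dQ a) => // i; rewrite addn0 => /hx ->//.
    exact: cyl_meas.
  have -> : cyl m a `&` Q = set0; last exact: measurable0.
  apply/seteqP; split => x //= [hx Qx]; apply: nQa; apply: (dQ x) => // i.
  by rewrite addn0 => /hx.
rewrite cyl_split; apply: countable_bigcupT_measurable => // c.
by apply: IH; rewrite addSnnS.
Qed.

Lemma meas_dep n (Q : set (nat -> C)) : depends n Q -> measurable (Q : set (seqspace C)).
Proof.
move=> dQ; have := @meas_dep_gen n 0 (fun=> point) Q dQ.
by rewrite (_ : cyl 0 _ = setT) ?setTI //; apply/seteqP; split.
Qed.

End Meas.
Arguments depends {C}.
Arguments upd {C}.
Lemma depends_mono (C : pointedType) k k' (Q : set (nat -> C)) : (k <= k')%N -> depends k Q -> depends k' Q.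
Proof. move=> kk dQ x y hxy; apply: dQ => i hi; apply: hxy; exact: leq_trans hi kk. Qed.
Local Open Scope classical_set_scope.
Section Prob.
Local Open Scope ereal_scope.
Variables (R : realType) (C : pointedType) (hC : countable [set: C]) (p : C -> R)
  (P : probability (seqspace C) R)
  (P_cyl : forall n a, P (cyl n a : set (seqspace C)) = (\prod_(i < n) p (a i))%:E).
Variable f : C -> nat.
Hypothesis finj : injective f.
Let h n := xget point [set c | f c = n].
Lemma hf c : h (f c) = c.
Proof. by apply: finj; have := @xgetPex C point [set c' | f c' = f c] (ex_intro _ c erefl). Qed.

Lemma sadd (G : C -> set (seqspace C)) : (forall c, measurable (G c)) ->
  (forall c c' x, G c x -> G c' x -> c = c') ->
  P (\bigcup_c G c) = \sum_(i <oo | i \in range f) P (G (h i)).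
Proof.
move=> mG dG.
have -> : \bigcup_c G c = \bigcup_(i in range f) G (h i).
  apply/seteqP; split => x /=.
    by move=> [c _ Gx]; exists (f c); [exists c|rewrite hf].
  by move=> [i _ Gx]; exists (h i).
apply: measure_bigcup => //.
move=> i j [c _ <-] [c' _ <-] [x [/= Hx Hx']]; rewrite !hf in Hx Hx'.
by rewrite (dG _ _ _ Hx Hx').
Qed.

Lemma indep n : forall m a (Q : set (nat -> C)) c, depends (m + n)%N Q ->
  P (cyl m a `&` Q `&` [set x | x (m + n)%N = c] : set (seqspace C)) =
  (p c)%:E * P (cyl m a `&` Q : set (seqspace C)).
Proof.
elim: n => [|n IH] m a Q c dQ.
  have [Qa|nQa] := pselect (Q a).
    have hQ : cyl m a `&` Q = cyl m a.
      apply/seteqP; split => x /=; first by case.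
      move=> hx; split => //; apply: (dQ a) => // i; rewrite addn0 => /hx ->//.
    have -> : cyl m a `&` Q `&` [set x | x (m + 0)%N = c] = cyl m.+1 (upd a m c).
      rewrite hQ addn0; apply/seteqP; split => x /=.
        move=> [hx xm] i; rewrite ltnS leq_eqVlt /upd.
        by case/orP => [/eqP ->|/[dup] him /hx ->]; rewrite ?eqxx // (ltn_eqF him).
      move=> hx; split; last by rewrite hx // /upd eqxx.
      by move=> i him; rewrite hx ?ltnS 1?ltnW // /upd (ltn_eqF him).
    rewrite hQ !P_cyl big_ord_recr /= /upd eqxx EFinM muleC; congr (_ * _)%E.
    by congr (_%:E); apply: eq_bigr => i _; rewrite (ltn_eqF (ltn_ord i)).
  have E0 : cyl m a `&` Q = set0.
    apply/seteqP; split => x //= [hx Qx]; apply: nQa; apply: (dQ x) => // i.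
    by rewrite addn0 => /hx.
  by rewrite E0 set0I measure0 mule0.
have dQ' : depends (m.+1 + n)%N Q by rewrite addSnnS.
rewrite -addSnnS -setIA cyl_split (@cyl_split C m a Q).
set X := [set x | x (m.+1 + n)%N = c].
have mX : forall c', measurable (cyl m.+1 (upd a m c') `&` (Q `&` X) : set (seqspace C)).
  move=> c'; apply: (@meas_dep_gen C hC n.+1) => x y hxy [Qx Xx]; split.
    by apply: (dQ' x) => // i hi; apply: hxy; lia.
  by rewrite /X /= -hxy //; lia.
have mQ : forall c', measurable (cyl m.+1 (upd a m c') `&` Q : set (seqspace C)).
  by move=> c'; apply: (@meas_dep_gen C hC n).
have disj (G : C -> set (nat -> C)) : forall c' c'' x,
    (cyl m.+1 (upd a m c') `&` G c') x -> (cyl m.+1 (upd a m c'') `&` G c'') x -> c' = c''.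
  move=> c' c'' x [h1 _] [h2 _].
  by have := h1 m (ltnSn m); have := h2 m (ltnSn m); rewrite /upd eqxx => -> ->.
rewrite (sadd (fun c' => cyl m.+1 (upd a m c') `&` (Q `&` X))) //; last first.
  by move=> c' c'' x; apply: (disj (fun=> Q `&` X)).
rewrite (sadd (fun c' => cyl m.+1 (upd a m c') `&` Q)) //; last first.
  by move=> c' c'' x; apply: (disj (fun=> Q)).
rewrite -nneseriesZl //; apply: eq_eseriesr => i _.
by rewrite setIA IH.
Qed.
End Prob.
Section NatClose.
Local Open Scope ring_scope.
Lemma nat_close (R : realType) (u v : nat) (s : R) :
  `|u%:R - s| < 1/2 -> `|v%:R - s| < 1/2 -> u = v.
Proof.
rewrite !ltr_norml => /andP[h1 h2] /andP[h3 h4].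
have [uv|vu|//] := ltngtP u v.
  have : (u.+1)%:R <= v%:R :> R by rewrite ler_nat.
  rewrite -addn1 natrD => h; exfalso; lra.
have : (v.+1)%:R <= u%:R :> R by rewrite ler_nat.
rewrite -addn1 natrD => h; exfalso; lra.
Qed.

End NatClose.

Local Open Scope classical_set_scope.
Local Open Scope ring_scope.

Theorem proposition3 (R : realType) (C : pointedType)
  (hC : countable [set: C])
  (p : C -> R) (p_gt0 : forall a, 0 < p a) (p_lt1 : forall a, p a < 1)
  (p_sum : (\esum_(a in [set: C]) (p a)%:E = 1)%E)
  (P : probability (seqspace C) R)
  (P_cyl : forall (n : nat) (a : nat -> C),
      P (cyl n a : set (seqspace C)) = (\prod_(i < n) p (a i))%:E) :
  ~ exists S : seqspace C -> R,
      measurable_fun [set: seqspace C] S /\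
      forall eps : R, 0 < eps ->
        P [set x : seqspace C | eps <= `|(Sret n x)%:R - S x| ]
          @[n --> \oo] --> 0%E.
Proof.
move=> [S [mS conv]].
have [f finj'] := countable_injP _ hC.
have finj : injective f by move=> x y fxy; apply: finj' => //; rewrite inE.
set A := fun n => [set x : seqspace C | 1/2 <= `|(Sret n x)%:R - S x| ].
have mA : forall n, measurable (A n).
  move=> n.
  have mg : measurable_fun [set: seqspace C] (fun x => (Sret n x)%:R : R).
    move=> _ B _; rewrite setTI; apply: (@meas_dep C hC n) => x y hxy.
    by rewrite /preimage /= (@Sret_dep C n x y hxy).
  have mh : measurable_fun [set: seqspace C] (fun x => `|(Sret n x)%:R - S x| : R).
    have := measurable_funB mg mS. have := @normr_measurable R setT. move=> h1 h2.
    have := measurableT_comp h1 h2. exact.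
  have mt : measurable [set true] by [].
  have := measurable_fun_ler (measurable_cst (1/2 : R)) mh measurableT mt.
  by rewrite setTI.
set a := (point : C).
set pa := p a.
set d := pa * pa - pa * pa * pa.
have pa0 : 0 < pa := p_gt0 a.
have pa1 : pa < 1 := p_lt1 a.
have d_gt0 : 0 < d.
  rewrite /d (_ : pa * pa - pa * pa * pa = (pa * pa) * (1 - pa)); last by ring.
  by apply: mulr_gt0; [apply: mulr_gt0|rewrite subr_gt0].
have := conv (1/2) ltac:(lra).
have hd2 : (0 < (d/2)%:E)%E by rewrite lte_fin; lra.
move=> /(_ _ (open_ereal_lt' hd2)).
move=> [N _ HN].
set k := N.
have h2 : (P (A k.+2) < (d/2)%:E)%E by apply: HN; rewrite /= /k; lia.
have h3 : (P (A k.+3) < (d/2)%:E)%E by apply: HN; rewrite /= /k; lia.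
pose E1 := cyl 1 (fun=> a) `&` setT `&` [set x : nat -> C | x (1 + k)%N = a].
have PE1 : P (E1 : set (seqspace C)) = (pa * pa)%:E.
  rewrite /E1 (@indep R C hC p P P_cyl f finj); last by move=> *.
  by rewrite setIT P_cyl big_ord1 -EFinM.
pose B := [set x : nat -> C | x (1 + k.+1)%N = a].
have PE2 : P (E1 `&` B : set (seqspace C)) = (pa * (pa * pa))%:E.
  have -> : E1 `&` B = cyl 1 (fun=> a) `&` (setT `&` [set x : nat -> C | x (1 + k)%N = a]) `&` B.
    by rewrite /E1 setIA.
  rewrite (@indep R C hC p P P_cyl f finj); last first.
    move=> x y hxy [_ hx]; split => //=; rewrite -hxy //; lia.
  by rewrite setIA -/E1 PE1 -EFinM.
have mE1 : measurable (E1 : set (seqspace C)).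
  apply: (@meas_dep C hC (2 + k)%N) => x y hxy [[hx _] hx1]; split; [split|] => //=.
    by move=> i; rewrite ltnS leqn0 => /eqP ->; rewrite -hxy // hx.
  by rewrite -hxy //; lia.
have mB : measurable (B : set (seqspace C)).
  by apply: (@meas_dep C hC (3 + k)%N) => x y hxy; rewrite /B /= -hxy //; lia.
have PF : P (E1 `\` B : set (seqspace C)) = d%:E.
  rewrite measureD //; last first.
    exact: (le_lt_trans (probability_le1 P mE1) (ltry _)).
  transitivity ((pa*pa)%:E - (pa*(pa*pa))%:E)%E; first by congr (_ - _)%E.
  rewrite -EFinB; congr (_%:E); rewrite /d; ring.
have sub : E1 `\` B `<=` A k.+2 `|` A k.+3.
  move=> x [[[hx0 _] hx1] hxB].
  have x0 : x 0%N = a by apply: hx0.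
  case: (pselect (A k.+2 x)) => [H|H]; [by left|right].
  case: (pselect (A k.+3 x)) => [//|H']; exfalso.
  move: H H'; rewrite /A /= => /negP; rewrite -ltNge => H /negP; rewrite -ltNge => H'.
  have e := @nat_close R _ _ _ H H'.
  have s1 : (1 <= Sret k.+2 x)%N by apply: (@Sret_ge1 C) => //=; rewrite x0 -hx1 add1n.
  have b2 := @Sret_border C _ _ s1.
  move: (s1); rewrite e => s1'.
  have b3 := @Sret_border C _ _ s1'.
  have hx1' : x k.+1 = a by move: hx1; rewrite /= add1n.
  apply: hxB; rewrite /B /= add1n.
  by rewrite -[x k.+2]/(x k.+3.-1) -b3 -e b2 /= hx1'.
have : (P (E1 `\` B : set (seqspace C)) <= P (A k.+2) + P (A k.+3))%E.
  apply: le_trans (measureU2 _ (mA _) (mA _)).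
  apply: le_measure => //; rewrite inE //; first exact: measurableD.
  exact: measurableU.
rewrite PF => hle.
have := lt_le_trans (lt_le_trans (lteD h2 h3) (lexx _)) (lexx _).
move=> hlt; have := le_lt_trans hle hlt.
by rewrite -EFinD lte_fin; lra.
Qed.
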